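(* Let $M$ be a strongly sofic monoid and let $K$ be a field. Then the monoid algebra $K[M]$ is stably finite.
   Context: A monoid $M$ is strongly sofic if for every finite subset $F \subset M$ there exists an integer $\Delta_F \geq 1$ such that for every $\varepsilon > 0$ there exist a non-empty finite set $D$ and a map $\sigma \colon M \to \operatorname{Map}(D)$ (where $\operatorname{Map}(D)$ is the monoid of all maps $D \to D$ under composition) satisfying: (1) $\sigma(1_M) = \mathrm{Id}_D$; (2) $d_D^{\mathrm{Ham}}(\sigma(k_1k_2),\sigma(k_1)\sigma(k_2)) \leq \varepsilon$ for all $k_1,k_2 \in F$; (3) $d_D^{\mathrm{Ham}}(\sigma(k_1),\sigma(k_2)) \geq 1-\varepsilon$ for all distinct $k_1,k_2 \in F$; (4) $|\sigma(k)^{-1}(v)| \leq \Delta_F$ for all $k \in F$, $v \in D$. Here $d_D^{\mathrm{Ham}}(f,g) = \frac{1}{|D|}|\{v \in D : f(v) \neq g(v)\}|$. A ring $R$ is stably finite if for every integer $d \geq 1$ the multiplicative monoid of $d \times d$ matrices over $R$ is directly finite, i.e., $XY = I$ implies $YX = I$. *)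

(* Defs.v *)
From HB Require Import structures.
From mathcomp Require Import all_boot all_order all_algebra.
From mathcomp Require Import finmap.
From mathcomp.multinomials Require Import monalg.
From mathcomp Require Import monoid.

Set Implicit Arguments.
Unset Strict Implicit.
Unset Printing Implicit Defensive.

Import Order.TTheory GRing.Theory Num.Theory.

Local Open Scope fset_scope.
Local Open Scope ring_scope.

(* The monoid algebra R[M] of a monoid M (mathcomp's [monoidType],     *)
(* which carries a choice structure) over a ring R: finitely supported *)
(* functions M -> R (multinomials' {malg R[M]}, with its Z-module and  *)
(* R-module structures) with the convolution product                   *)
(*   (sum_a f_a a) * (sum_b g_b b) = sum_{a,b} f_a g_b (a*b).          *)
(* multinomials only provides the ring structure for its restricted    *)
(* monomType; we redo it here for an arbitrary monoid.                 *)

Definition monoid_algebra (M : monoidType) (R : nzRingType) : predArgType :=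
  @malg M R.

HB.instance Definition _ (M : monoidType) (R : nzRingType) :=
  GRing.Lmodule.on (monoid_algebra M R).

Section MonoidAlgebraRing.
Context (M : monoidType) (R : nzRingType).

Implicit Types (g : monoid_algebra M R).

Definition ma_one : monoid_algebra M R := << (1%g : M) >>.

Definition ma_mul g1 g2 : monoid_algebra M R :=
  \sum_(k1 <- msupp g1) \sum_(k2 <- msupp g2)
     << g1@_k1 * g2@_k2 *g (k1 * k2)%g >>.

Lemma ma_mullw (d1 d2 : {fset M}) g1 g2 :
  msupp g1 `<=` d1 -> msupp g2 `<=` d2 ->
  ma_mul g1 g2 = \sum_(k1 <- d1) \sum_(k2 <- d2)
     << g1@_k1 * g2@_k2 *g (k1 * k2)%g >>.
Proof.
move=> le_d1 le_d2; rewrite /ma_mul (big_fset_incl _ le_d1) /=.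
  apply/eq_bigr=> k1 _; apply/big_fset_incl => // k _ /mcoeff_outdom ->.
  by rewrite mulr0 monalgU0.
move=> k _ /mcoeff_outdom g1k.
by rewrite big1 => // k' _; rewrite g1k mul0r monalgU0.
Qed.

Lemma ma_mulrw (d1 d2 : {fset M}) g1 g2 :
  msupp g1 `<=` d1 -> msupp g2 `<=` d2 ->
  ma_mul g1 g2 = \sum_(k2 <- d2) \sum_(k1 <- d1)
     << g1@_k1 * g2@_k2 *g (k1 * k2)%g >>.
Proof. by move=> le_d1 le_d2; rewrite (ma_mullw le_d1 le_d2) exchange_big. Qed.

Lemma ma_mul0g : left_zero 0 ma_mul.
Proof. by move=> g; rewrite /ma_mul msupp0 big_seq_fset0. Qed.

Lemma ma_mulg0 : right_zero 0 ma_mul.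
Proof.
by move=> g; rewrite /ma_mul exchange_big /= msupp0 big_seq_fset0.
Qed.

Lemma ma_mulUg c k g :
  ma_mul << c *g k >> g = \sum_(k' <- msupp g) << c * g@_k' *g (k * k')%g >>.
Proof.
rewrite (ma_mullw msuppU_le (fsubset_refl _)) big_seq_fset1.
by apply/eq_bigr => k' _; rewrite mcoeffUU.
Qed.

Lemma ma_mulgU c k g :
  ma_mul g << c *g k >> = \sum_(k' <- msupp g) << g@_k' * c *g (k' * k)%g >>.
Proof.
rewrite (ma_mulrw (fsubset_refl _) msuppU_le) big_seq_fset1.
by apply/eq_bigr=> k' _; rewrite mcoeffUU.
Qed.

Lemma ma_mulUU c1 c2 k1 k2 :
  ma_mul << c1 *g k1 >> << c2 *g k2 >> = << c1 * c2 *g (k1 * k2)%g >>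
  :> monoid_algebra M R.
Proof. by rewrite (ma_mulrw msuppU_le msuppU_le) !big_seq_fset1 !mcoeffUU. Qed.

Lemma ma_mulEl1 g1 g2 :
  ma_mul g1 g2 = \sum_(k1 <- msupp g1) ma_mul << g1@_k1 *g k1 >> g2.
Proof. by apply/eq_bigr=> k _; rewrite ma_mulUg. Qed.

Lemma ma_mulEr1 g1 g2 :
  ma_mul g1 g2 = \sum_(k2 <- msupp g2) ma_mul g1 << g2@_k2 *g k2 >>.
Proof.
rewrite (ma_mulrw (fsubset_refl _) (fsubset_refl _)).
by apply/eq_bigr=> k _; rewrite ma_mulgU.
Qed.

Lemma ma_mul1g : left_id ma_one ma_mul.
Proof.
move=> g; rewrite ma_mulUg [RHS]monalgE.
by apply/eq_bigr=> kg _; rewrite mul1r mul1g.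
Qed.

Lemma ma_mulg1 : right_id ma_one ma_mul.
Proof.
move=> g; rewrite ma_mulgU [RHS]monalgE.
by apply/eq_bigr=> k _; rewrite mulr1 mulg1.
Qed.

Lemma ma_mulgDl : left_distributive ma_mul +%R.
Proof.
move=> g1 g2 g.
rewrite [in RHS](@ma_mullw _ _ g1 g (fsubsetUl _ (msupp g2)) (fsubset_refl _)).
rewrite [in RHS](@ma_mullw _ _ g2 g (fsubsetUr (msupp g1) _) (fsubset_refl _)).
rewrite (ma_mullw (msuppD_le _ _) (fsubset_refl _)).
rewrite -big_split /=; apply/eq_bigr=> k1 _.
rewrite -big_split /=; apply/eq_bigr=> k2 _.
by rewrite mcoeffD mulrDl monalgUD.
Qed.

Lemma ma_mulgDr : right_distributive ma_mul +%R.
Proof.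
move=> g g1 g2.
rewrite [in RHS](@ma_mulrw _ _ g g1 (fsubset_refl _) (fsubsetUl _ (msupp g2))).
rewrite [in RHS](@ma_mulrw _ _ g g2 (fsubset_refl _) (fsubsetUr (msupp g1) _)).
rewrite (ma_mulrw (fsubset_refl _) (msuppD_le _ _)).
rewrite -big_split /=; apply/eq_bigr => k1 _.
rewrite -big_split /=; apply/eq_bigr => k2 _.
by rewrite mcoeffD mulrDr monalgUD.
Qed.

Lemma ma_mulA : associative ma_mul.
Proof.
move=> g1 g2 g3.
rewrite [RHS](big_morph (ma_mul^~ _) (fun _ _ => ma_mulgDl _ _ _) (ma_mul0g _)).
rewrite ma_mulEl1; apply/eq_bigr=> k1 _.
rewrite [LHS](big_morph (ma_mul _) (fun _ _ => ma_mulgDr _ _ _) (ma_mulg0 _)).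
rewrite [RHS](big_morph (ma_mul^~ _) (fun _ _ => ma_mulgDl _ _ _) (ma_mul0g _)).
apply/eq_bigr=> k2 _.
rewrite [LHS](big_morph (ma_mul _) (fun _ _ => ma_mulgDr _ _ _) (ma_mulg0 _)).
by rewrite ma_mulEr1; apply/eq_bigr=> k3 _; rewrite !ma_mulUU mulrA mulgA.
Qed.

Lemma ma_oner_eq0 : ma_one != 0.
Proof. by apply/eqP/malgP=> /(_ 1%g) /eqP; rewrite !mcoeffsE oner_eq0. Qed.

HB.instance Definition _ := GRing.Zmodule_isRing.Build (monoid_algebra M R)
  ma_mulA ma_mul1g ma_mulg1 ma_mulgDl ma_mulgDr ma_oner_eq0.

End MonoidAlgebraRing.

Definition stably_finite (R : pzRingType) : Prop :=
  forall (d : nat), (0 < d)%N ->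
  forall X Y : 'M[R]_d, X *m Y = 1%:M -> Y *m X = 1%:M.

Definition ham_dist (D : finType) (f g : D -> D) : rat :=
  (#|[set v | f v != g v]|%:R / #|D|%:R)%R.

Definition strongly_sofic (M : monoidType) : Prop :=
  forall F : seq M,
  exists Delta : nat, (1 <= Delta)%N /\
  forall eps : rat, 0 < eps ->
  exists (D : finType) (sigma : M -> D -> D),
    [/\ (0 < #|D|)%N,
        (forall v : D, sigma 1%g v = v),
        (forall k1 k2, k1 \in F -> k2 \in F ->
           ham_dist (sigma (k1 * k2)%g) (sigma k1 \o sigma k2) <= eps),
        (forall k1 k2, k1 \in F -> k2 \in F -> k1 != k2 ->
           1 - eps <= ham_dist (sigma k1) (sigma k2)) &
        (forall k, k \in F -> forall v : D,
           (#|[set u | sigma k u == v]| <= Delta)%N)].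

(* Main.v *)
Require Import Defs.
From HB Require Import structures.
From mathcomp Require Import all_boot all_order all_algebra.
From mathcomp Require Import finmap.
From mathcomp.multinomials Require Import monalg.
From mathcomp Require Import monoid.
From mathcomp Require Import zify.
From mathcomp Require Import ring lra.
Set Implicit Arguments.
Unset Strict Implicit.
Unset Printing Implicit Defensive.
Import Order.TTheory GRing.Theory Num.Theory.
Local Open Scope fset_scope.
Local Open Scope ring_scope.

Section Ranks.
Context (K : fieldType).

Lemma mul_delta_entry n (P : 'M[K]_n) (j p q : 'I_n) :
  (P *m delta_mx j j) p q = P p j * (j == q)%:R.
Proof.
rewrite !mxE (bigD1 j) //= big1 ?addr0.
  by rewrite mxE eqxx eq_sym.
by move=> r rj; rewrite mxE (negPf rj) mulr0.
Qed.

Lemma rank_colsupp n (P : 'M[K]_n) (J : {set 'I_n}) :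
  (forall p q, q \notin J -> P p q = 0) -> (\rank P <= #|J|)%N.
Proof.
move=> HP.
have -> : P = \sum_(j in J) (P *m delta_mx j j).
  apply/matrixP=> p q; rewrite summxE.
  under eq_bigr do rewrite mul_delta_entry.
  case: (boolP (q \in J)) => qJ.
    rewrite (bigD1 q) //= big1 ?addr0 ?eqxx ?mulr1 //.
    by move=> j /andP[_ jq]; rewrite (negPf jq) mulr0.
  rewrite HP // big1 // => j jJ.
  case: (eqVneq j q) => [ejq|]; last by rewrite mulr0.
  by rewrite -ejq jJ in qJ.
rewrite -sum1_card.
elim/big_ind2: _ => //.
- by rewrite mxrank0.
- move=> A a B b HA HB; exact: leq_trans (mxrank_add _ _) (leq_add HA HB).
- by move=> j _; apply: leq_trans (mxrankM_maxr _ _) _; rewrite mxrank_delta.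
Qed.

Lemma rank_swap n (A B : 'M[K]_n) :
  (\rank (B *m A - 1%:M)%R <= \rank (A *m B - 1%:M)%R)%N.
Proof.
set Kx := kermx (A *m B - 1%:M).
have h1 : Kx *m (A *m B - 1%:M) = 0 by apply: mulmx_ker.
have h2 : Kx *m A *m B = Kx.
  by move/eqP: h1; rewrite mulmxBr mulmx1 subr_eq0 mulmxA => /eqP.
have h3 : (Kx *m A <= kermx (B *m A - 1%:M))%MS.
  apply/sub_kermxP; rewrite mulmxBr mulmx1 mulmxA h2 subrr //.
have r1 : (\rank Kx <= \rank (Kx *m A))%N.
  by rewrite -{1}h2 mxrankM_maxl.
have r2 := mxrankS h3.
move: r1 r2; rewrite !mxrank_ker => r1 r2.
have := rank_leq_col (A *m B - 1%:M); have := rank_leq_col (B *m A - 1%:M).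
lia.
Qed.

Lemma rank_mxsub n m (P : 'M[K]_n) (f g : 'I_m -> 'I_n) :
  (\rank (mxsub f g P) <= \rank P)%N.
Proof.
rewrite -[P]mul1mx mxsub_mul.
apply: leq_trans (mxrankM_maxr _ _) _.
rewrite -[P in colsub _ P]mulmx1 -mulmx_colsub mul1mx; exact: mxrankM_maxl.
Qed.

Lemma rank_diag m (Q : 'M[K]_m) :
  (forall i j, i != j -> Q i j = 0) -> (forall i, Q i i != 0) -> \rank Q = m.
Proof.
move=> Hoff Hdiag.
have -> : Q = diag_mx (\row_i Q i i).
  apply/matrixP=> i j; rewrite !mxE; case: (eqVneq i j) => [->|ij].
    by rewrite mulr1n.
  by rewrite Hoff // mulr0n.
apply: mxrank_unit; rewrite unitmxE det_diag unitfE.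
by apply/prodf_neq0 => i _; rewrite mxE.
Qed.

End Ranks.

Lemma card_has (T : finType) (A : eqType) (s : seq A) (P : A -> T -> bool) :
  (#|[set w | has (P^~ w) s]| <= \sum_(x <- s) #|[set w | P x w]|)%N.
Proof.
elim: s => [|x s IH].
  have -> : [set w | has (P^~ w) [::]] = set0 by apply/setP=> w; rewrite !inE.
  by rewrite cards0.
rewrite big_cons.
have -> : [set w | has (P^~ w) (x :: s)] = [set w | P x w] :|: [set w | has (P^~ w) s].
  by apply/setP=> w; rewrite !inE.
rewrite cardsU; apply: leq_trans (leq_subr _ _) _.
by rewrite leq_add2l.
Qed.

Lemma greedy (T : finType) (nb : T -> {set T}) (k : nat) :
  (forall x, #|nb x| <= k)%N ->
  (forall x y, (y \in nb x) = (x \in nb y)) ->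
  forall G : {set T}, exists V : {set T},
    [/\ V \subset G, (#|G| <= k.+1 * #|V|)%N &
        forall x y, x \in V -> y \in V -> x != y -> y \notin nb x].
Proof.
move=> Hk Hsym G.
move: {2}#|G| (leqnn #|G|) => n; elim: n G => [|n IH] G HG.
  exists set0; rewrite sub0set cards0 muln0; split => //.
  by move=> x y; rewrite inE.
case: (set_0Vmem G) => [->|[x xG]].
  exists set0; rewrite sub0set cards0 muln0; split => //.
  by move=> x y; rewrite inE.
set G' := G :\: (x |: nb x).
have cG' : (#|G| <= #|G'| + k.+1)%N.
  rewrite /G' -(cardsID (x |: nb x) G) addnC leq_add2l.
  apply: leq_trans (subset_leq_card (subsetIr _ _)) _.
  rewrite cardsU1; have := Hk x; case: (x \in nb x) => /=; lia.
have [|V [VG' cV HV]] := IH G'.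
  have : (#|G'| < #|G|)%N by apply: proper_card; apply/properP; split;
    [rewrite subDset subsetU // orbC subxx | exists x => //; rewrite !inE eqxx].
  lia.

exists (x |: V); split.
- rewrite subUset sub1set xG /=; apply: subset_trans VG' _; exact: subsetDl.
- have xV : x \notin V.
    apply/negP=> /(subsetP VG'); rewrite !inE eqxx; by [].
  rewrite cardsU1 xV /= mulnDr muln1 -/G'. lia.
- have inV y : y \in V -> y \notin x |: nb x.
    by move=> /(subsetP VG'); rewrite inE => /andP[].
  move=> y z; rewrite !inE => /orP[/eqP->|yV] /orP[/eqP->|zV]; rewrite ?eqxx //.
  + by move=> _; have := inV z zV; rewrite inE negb_or => /andP[].
  + move=> _; have := inV y yV; rewrite inE negb_or => /andP[_].
    by rewrite Hsym.
  + exact: HV.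
Qed.

Section Main.
Context (M : monoidType) (K : fieldType).
Notation KM := (monoid_algebra M K).

Lemma coef_mul (S : {fset M}) (x y : KM) k :
  msupp x `<=` S -> msupp y `<=` S ->
  (x * y)@_k = \sum_(k1 <- S) \sum_(k2 <- S) x@_k1 * y@_k2 * ((k1 * k2)%g == k)%:R.
Proof.
move=> Hx Hy.
have -> : x * y = ma_mul x y by [].
rewrite (ma_mullw Hx Hy) raddf_sum; apply: eq_bigr => k1 _.
rewrite raddf_sum; apply: eq_bigr => k2 _.
by rewrite /= mcoeffU mulr_natr.
Qed.

Lemma coef_one k : (1 : KM)@_k = (k == 1%g)%:R.
Proof. by have -> : (1 : KM) = ma_one _ _ by []; rewrite mcoeffU eq_sym. Qed.

Context (D : finType) (sigma : M -> D -> D) (U : {fset M}).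

Definition Phi (a : KM) (u v : D) : K := \sum_(k <- U) a@_k * (sigma k v == u)%:R.

Lemma PhiB a b u v : Phi (a - b) u v = Phi a u v - Phi b u v.
Proof.
rewrite /Phi -sumrB; apply: eq_bigr => k _; by rewrite mcoeffB mulrBl.
Qed.

Lemma PhiD a b u v : Phi (a + b) u v = Phi a u v + Phi b u v.
Proof.
rewrite /Phi -big_split; apply: eq_bigr => k _; by rewrite mcoeffD mulrDl.
Qed.

Lemma Phi0 u v : Phi 0 u v = 0.
Proof. by rewrite /Phi big1 // => k _; rewrite mcoeff0 mul0r. Qed.

Lemma Phi_sum (I : Type) (r : seq I) (P : pred I) (F : I -> KM) u v :
  Phi (\sum_(i <- r | P i) F i) u v = \sum_(i <- r | P i) Phi (F i) u v.
Proof.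
elim/big_rec2: _ => [|i y a _ <-]; first by rewrite Phi0.
by rewrite PhiD.
Qed.

Lemma Phi1 u v : (1%g \in U) -> sigma 1%g v = v -> Phi 1 u v = (v == u)%:R.
Proof.
move=> U1 s1; rewrite /Phi (big_fsetD1 1%g) //= big1_fset ?addr0.
  by rewrite coef_one eqxx mul1r s1.
by move=> k; rewrite !inE coef_one => /andP[/negPf-> _] _; rewrite mul0r.
Qed.

Lemma Phi_mul (S : {fset M}) (x y : KM) u w :
  msupp x `<=` S -> msupp y `<=` S -> S `<=` U ->
  (forall k1 k2, k1 \in S -> k2 \in S -> (k1 * k2)%g \in U) ->
  (forall k1 k2, k1 \in S -> k2 \in S -> sigma (k1 * k2)%g w = sigma k1 (sigma k2 w)) ->
  \sum_v Phi x u v * Phi y v w = Phi (x * y) u w.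
Proof.
move=> Hx Hy SU SSU Hw.
have red (z : KM) (f : M -> K) : msupp z `<=` S ->
   \sum_(k <- U) z@_k * f k = \sum_(k <- S) z@_k * f k.
  move=> Hz; apply/esym/big_fset_incl => // k kU kS.
  by rewrite mcoeff_outdom ?mul0r //; apply: contra kS; apply/fsubsetP.
rewrite /Phi.
under eq_bigr do rewrite (red x) // (red y) // mulr_suml.
rewrite exchange_big /=.
under [RHS]eq_bigr do rewrite (coef_mul _ Hx Hy) mulr_suml.
rewrite [RHS]exchange_big /= [LHS]big_seq [RHS]big_seq; apply: eq_bigr => k1 k1S.
under [RHS]eq_bigr do rewrite mulr_suml.
rewrite [RHS]exchange_big /=.
under eq_bigr do rewrite mulr_sumr.
rewrite exchange_big /= [LHS]big_seq [RHS]big_seq; apply: eq_bigr => k2 k2S.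
rewrite (big_fsetD1 (k1 * k2)%g) /=; last exact: SSU.
rewrite big1_fset ?addr0; last first.
  by move=> k; rewrite !inE => /andP[kk _]; rewrite eq_sym (negPf kk) mulr0 mul0r.
rewrite eqxx mulr1 (bigD1 (sigma k2 w)) //= big1 ?addr0.
  by rewrite eqxx mulr1 Hw // mulrAC.
by move=> v; rewrite eq_sym => vne; rewrite (negPf vne) !mulr0.
Qed.


Context (d : nat).
Notation N := #|{: 'I_d * D}|.

Definition bigPhi (Z : 'M[KM]_d) : 'M[K]_N :=
  \matrix_(p, q) Phi (Z (enum_val p).1 (enum_val q).1) (enum_val p).2 (enum_val q).2.

Lemma bigPhi_mulE (Z1 Z2 : 'M[KM]_d) (p q : 'I_N) :
  (bigPhi Z1 *m bigPhi Z2) p q =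
  \sum_(l < d) \sum_(v : D) Phi (Z1 (enum_val p).1 l) (enum_val p).2 v *
                             Phi (Z2 l (enum_val q).1) v (enum_val q).2.
Proof.
rewrite mxE.
have -> : \sum_(r < N) bigPhi Z1 p r * bigPhi Z2 r q =
   \sum_(x in {: 'I_d * D}) Phi (Z1 (enum_val p).1 x.1) (enum_val p).2 x.2 *
                             Phi (Z2 x.1 (enum_val q).1) x.2 (enum_val q).2.
  by rewrite [RHS]big_enum_val; apply: eq_bigr => r _; rewrite !mxE.
by rewrite pair_bigA; apply: eq_bigl => x.
Qed.

Lemma bigPhiB (Z1 Z2 : 'M[KM]_d) : bigPhi (Z1 - Z2) = bigPhi Z1 - bigPhi Z2.
Proof. by apply/matrixP=> p q; rewrite !mxE PhiB. Qed.

Lemma bigPhi1 : 1%g \in U -> (forall v, sigma 1%g v = v) -> bigPhi 1%:M = 1%:M.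
Proof.
move=> U1 s1; apply/matrixP=> p q; rewrite !mxE.
rewrite -(inj_eq enum_val_inj).
case: (enum_val p) => i u; case: (enum_val q) => j w /=.
rewrite xpair_eqE; case: (eqVneq i j) => _ /=.
  by rewrite Phi1 // eq_sym.
by rewrite Phi0.
Qed.

Lemma bigPhi_mul (S : {fset M}) (Z1 Z2 : 'M[KM]_d) (p q : 'I_N) :
  (forall i j, msupp (Z1 i j) `<=` S) -> (forall i j, msupp (Z2 i j) `<=` S) ->
  S `<=` U ->
  (forall k1 k2, k1 \in S -> k2 \in S -> (k1 * k2)%g \in U) ->
  (forall k1 k2, k1 \in S -> k2 \in S ->
     sigma (k1 * k2)%g (enum_val q).2 = sigma k1 (sigma k2 (enum_val q).2)) ->
  (bigPhi Z1 *m bigPhi Z2) p q = bigPhi (Z1 *m Z2) p q.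
Proof.
move=> H1 H2 SU SSU Hw.
rewrite bigPhi_mulE mxE mxE Phi_sum; apply: eq_bigr => l _.
exact: Phi_mul.
Qed.


Definition nb (k0 : M) (v : D) : {set D} :=
  [set y | has (fun k => (sigma k v == sigma k0 y) || (sigma k y == sigma k0 v)) U].

Lemma lower_rank (Z : 'M[KM]_d) i0 j0 k0 (V : {set D}) :
  k0 \in U -> (Z i0 j0)@_k0 != 0 ->
  (forall v, v \in V -> forall k, k \in U -> k != k0 -> sigma k v != sigma k0 v) ->
  (forall v v', v \in V -> v' \in V -> v != v' -> v' \notin nb k0 v) ->
  (#|V| <= \rank (bigPhi Z))%N.
Proof.
move=> k0U nz good indep.
pose f (r : 'I_#|V|) : 'I_N := enum_rank (i0, sigma k0 (enum_val r)).
pose g (r : 'I_#|V|) : 'I_N := enum_rank (j0, enum_val r).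
have HQ r s : mxsub f g (bigPhi Z) r s =
   Phi (Z i0 j0) (sigma k0 (enum_val r)) (enum_val s).
  by rewrite !mxE /f /g !enum_rankK.
rewrite -(rank_diag (Q := mxsub f g (bigPhi Z))); first exact: rank_mxsub.
- move=> r s rs; rewrite HQ /Phi big1_fset // => k kU _.
  have : enum_val r \notin nb k0 (enum_val s).
    apply: indep; rewrite ?enum_valP //.
    by apply: contra rs => /eqP/enum_val_inj ->.
  rewrite inE => /hasPn /(_ k kU); rewrite negb_or => /andP[/negPf -> _].
  by rewrite mulr0.
- move=> r; rewrite HQ /Phi (big_fsetD1 k0) //= big1_fset ?addr0.
    by rewrite eqxx mulr1.
  move=> k; rewrite !inE => /andP[kk kU] _.
  by rewrite (negPf (good _ (enum_valP r) k kU kk)) mulr0.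
Qed.

End Main.

Lemma sum_le_seq (T : eqType) (r : seq T) (F : T -> rat) c :
  (forall x, x \in r -> F x <= c) -> \sum_(x <- r) F x <= (size r)%:R * c.
Proof.
elim: r => [|x r IH] H; first by rewrite big_nil mul0r.
rewrite big_cons /= -add1n natrD mulrDl mul1r lerD //.
  by apply: H; rewrite mem_head.
by apply: IH => y yr; apply: H; rewrite in_cons yr orbT.
Qed.

Lemma sum_le_seq_nat (T : eqType) (r : seq T) (F : T -> nat) c :
  (forall x, x \in r -> F x <= c)%N -> (\sum_(x <- r) F x <= size r * c)%N.
Proof.
elim: r => [|x r IH] H; first by rewrite big_nil.
rewrite big_cons /= mulSn leq_add //.
  by apply: H; rewrite mem_head.
by apply: IH => y yr; apply: H; rewrite in_cons yr orbT.
Qed.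

Lemma mxsubE (R : zmodType) n (P Q : 'M[R]_n) p q : (P - Q) p q = P p q - Q p q.
Proof. by rewrite !mxE. Qed.

Theorem corollary1p3 (M : monoidType) (K : fieldType) :
  strongly_sofic M -> stably_finite (monoid_algebra M K).
Proof.
move=> Hsofic d d0 X Y XY.
pose S : {fset M} := \bigcup_(p <- enum [set: 'I_d * 'I_d])
   (msupp (X p.1 p.2) `|` msupp (Y p.1 p.2)).
have SX i j : msupp (X i j) `<=` S.
  apply: fsubset_trans (fsubsetUl _ (msupp (Y i j))) _.
  have := @bigfcup_sup _ _ (enum [set: 'I_d * 'I_d]) (i, j) xpredT
    (fun p => msupp (X p.1 p.2) `|` msupp (Y p.1 p.2)).
  by rewrite mem_enum inE => /(_ isT isT).
have SY i j : msupp (Y i j) `<=` S.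
  apply: fsubset_trans (fsubsetUr (msupp (X i j)) _) _.
  have := @bigfcup_sup _ _ (enum [set: 'I_d * 'I_d]) (i, j) xpredT
    (fun p => msupp (X p.1 p.2) `|` msupp (Y p.1 p.2)).
  by rewrite mem_enum inE => /(_ isT isT).
pose U : {fset M} := S `|` [fset (k1 * k2)%g | k1 in S, k2 in S] `|` [fset 1%g].
have SU : S `<=` U by rewrite /U -fsetUA fsubsetUl.
have SSU k1 k2 : k1 \in S -> k2 \in S -> (k1 * k2)%g \in U.
  move=> h1 h2; rewrite /U !inE; apply/orP; left; apply/orP; right.
  exact: in_imfset2.
have U1 : 1%g \in U by rewrite /U !inE eqxx orbT.
pose m := #|` U|. pose s := #|` S|.
have [Delta [Delta1 HD]] := Hsofic U.
pose C := ((2 * m * Delta).+1 * 2 * d)%N.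
pose T := (m + C * (s * s))%N.
pose eps : rat := (T.+1%:R)^-1.
have eps_gt0 : 0 < eps by rewrite invr_gt0 ltr0n.
have [D [sigma [D0 s1 Hmul Hdist Hfib]]] := HD eps eps_gt0.
pose Dn := #|D|.
have Dn0 : (0 : rat) < Dn%:R by rewrite ltr0n.
have E0 : (0 : rat) <= eps * Dn%:R by rewrite mulr_ge0 // ltW.
pose Bad := [set w : D | has (fun k1 => has (fun k2 =>
   sigma (k1 * k2)%g w != sigma k1 (sigma k2 w)) S) S].
have ham1 k1 k2 : k1 \in S -> k2 \in S ->
  (#|[set w | sigma (k1 * k2)%g w != sigma k1 (sigma k2 w)]|%:R : rat) <= eps * Dn%:R.
  move=> h1 h2; have := Hmul k1 k2 (fsubsetP SU _ h1) (fsubsetP SU _ h2).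
  by rewrite /ham_dist ler_pdivrMr.
have cBad : (#|Bad|%:R : rat) <= (s * s)%:R * (eps * Dn%:R).
  have h := card_has (S : seq M) (fun k1 w => has (fun k2 =>
     sigma (k1 * k2)%g w != sigma k1 (sigma k2 w)) S).
  move: h; rewrite -(ler_nat rat) => h; apply: le_trans h _.
  rewrite natr_sum natrM -mulrA; apply: sum_le_seq => k1 h1.
  have h' := card_has (S : seq M) (fun k2 w =>
     sigma (k1 * k2)%g w != sigma k1 (sigma k2 w)).
  move: h'; rewrite -(ler_nat rat) => h'; apply: le_trans h' _.
  rewrite natr_sum; apply: sum_le_seq => k2 h2; exact: ham1.
have agree k k0 : k \in U -> k0 \in U -> k != k0 ->
  (#|[set v | sigma k v == sigma k0 v]|%:R : rat) <= eps * Dn%:R.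
  move=> hk hk0 kk0; have := Hdist k k0 hk hk0 kk0.
  rewrite /ham_dist ler_pdivlMr //.
  have := cardsC [set v | sigma k v != sigma k0 v].
  have -> : ~: [set v | sigma k v != sigma k0 v] = [set v | sigma k v == sigma k0 v].
    by apply/setP=> v; rewrite !inE negbK.
  move/(congr1 (fun n => n%:R : rat)); rewrite natrD -/Dn => hc.
  lra.
have nbB k0 v : k0 \in U -> (#|nb sigma U k0 v| <= 2 * m * Delta)%N.
  move=> hk0.
  apply: leq_trans (card_has (U : seq M) (fun k y =>
     (sigma k v == sigma k0 y) || (sigma k y == sigma k0 v))) _.
  rewrite [(2 * m * Delta)%N]mulnAC mulnC; apply: sum_le_seq_nat => k hk.
  have -> : [set y | (sigma k v == sigma k0 y) || (sigma k y == sigma k0 v)] =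
     [set y | sigma k0 y == sigma k v] :|: [set y | sigma k y == sigma k0 v].
    by apply/setP=> y; rewrite !inE eq_sym.
  rewrite cardsU; apply: leq_trans (leq_subr _ _) _.
  by rewrite mul2n -addnn leq_add // Hfib.
pose Z := Y *m X - 1%:M.
have outU i j k : k \notin U -> (Z i j)@_k = 0.
  move=> kU; rewrite /Z mxsubE mcoeffB !mxE raddf_sum big1 /=.
    rewrite mcoeffMn coef_one.
    have -> : (k == 1%g) = false by apply: contraNF kU => /eqP ->.
    by rewrite mulr0n mul0rn subrr.
  move=> l _; rewrite (coef_mul _ (SY i l) (SX l j)) big_seq big1 // => k1 h1.
  rewrite big_seq big1 // => k2 h2.
  have -> : ((k1 * k2)%g == k) = false.
    by apply: contraNF kU => /eqP <-; exact: SSU.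
  by rewrite mulr0.
pose A := bigPhi sigma U X. pose B := bigPhi sigma U Y.
pose J := [set q : 'I_#|{: 'I_d * D}| | (enum_val q).2 \in Bad].
have cJ : (#|J| <= d * #|Bad|)%N.
  have -> : (d * #|Bad|)%N = #|setX [set: 'I_d] Bad| by rewrite cardsX cardsT card_ord.
  apply: leq_trans (leq_imset_card enum_rank _).
  apply: subset_leq_card; apply/subsetP => q; rewrite inE => qJ.
  apply/imsetP; exists (enum_val q); last by rewrite enum_valK.
  by rewrite inE /= in_setT.
have goodq q : q \notin J -> forall k1 k2, k1 \in S -> k2 \in S ->
    sigma (k1 * k2)%g (enum_val q).2 = sigma k1 (sigma k2 (enum_val q).2).
  rewrite !inE => /hasPn H k1 k2 h1 h2.
  by move: (H k1 h1) => /hasPn /(_ k2 h2); rewrite negbK => /eqP.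
have r1 : (\rank (A *m B - 1%:M)%R <= #|J|)%N.
  apply: rank_colsupp => p q qJ.
  rewrite mxsubE (bigPhi_mul p SX SY SU SSU (goodq q qJ)) XY bigPhi1 //.
  by rewrite subrr.
have r2 : (\rank (bigPhi sigma U (Y *m X) - B *m A)%R <= #|J|)%N.
  apply: rank_colsupp => p q qJ.
  by rewrite mxsubE (bigPhi_mul p SY SX SU SSU (goodq q qJ)) subrr.
have rZ : (\rank (bigPhi sigma U Z) <= 2 * (d * #|Bad|))%N.
  have -> : bigPhi sigma U Z = (B *m A - 1%:M) + (bigPhi sigma U (Y *m X) - B *m A).
    by rewrite /Z bigPhiB bigPhi1 // [RHS]addrCA [_ + - (B *m A)]addrAC subrr add0r.
  apply: leq_trans (mxrank_add _ _) _.
  have := rank_swap A B. lia.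
have nbsym k0 x y : (y \in nb sigma U k0 x) = (x \in nb sigma U k0 y).
  by rewrite !inE; apply: eq_has => k /=; rewrite orbC.
have hT : T%:R * eps < 1 by rewrite ltr_pdivrMr ?ltr0n // mul1r ltr_nat.
have inU i j k0 : k0 \in U -> (Z i j)@_k0 = 0.
  move=> hk0; apply/eqP; apply: contraT => nz.
  pose G := [set v | all (fun k => (k == k0) || (sigma k v != sigma k0 v)) U].
  have cG : (Dn%:R : rat) - m%:R * (eps * Dn%:R) <= #|G|%:R.
    have hc := cardsC G.
    have cGc : (#|~: G|%:R : rat) <= m%:R * (eps * Dn%:R).
      have sub : ~: G \subset
          [set v | has (fun k => (k != k0) && (sigma k v == sigma k0 v)) U].
        apply/subsetP => v; rewrite !inE => /allPn [k kU]; rewrite negb_or negbK => hk.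
        by apply/hasP; exists k.
      have := card_has (U : seq M) (fun k v => (k != k0) && (sigma k v == sigma k0 v)).
      move/(leq_trans (subset_leq_card sub)); rewrite -(ler_nat rat) => h.
      apply: le_trans h _.
      rewrite natr_sum; apply: sum_le_seq => k hk.
      case: (eqVneq k k0) => [->|kk0] /=.
        have -> : [set v | false] = set0 :> {set D} by apply/setP=> v; rewrite !inE.
        by rewrite cards0.
      exact: agree.
    move: hc => /(congr1 (fun n => n%:R : rat)); rewrite natrD -/Dn => hc.
    lra.
  have [V [VG cV indep]] := @greedy D (nb sigma U k0) (2 * m * Delta)
     (fun v => nbB k0 v hk0) (nbsym k0) G.
  have goodV v : v \in V -> forall k, k \in U -> k != k0 -> sigma k v != sigma k0 v.
    move=> /(subsetP VG); rewrite inE => /allP H k kU kk0.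
    by have := H k kU; rewrite (negPf kk0).
  have lr := lower_rank (Z := Z) (i0 := i) (j0 := j) (V := V) hk0 nz goodV
     (fun v v' hv hv' => indep v v' hv hv').
  have cGB : (#|G| <= C * #|Bad|)%N.
    apply: leq_trans cV _; rewrite /C -!mulnA; apply: leq_mul => //.
    exact: leq_trans lr rZ.
  move: cGB; rewrite -(ler_nat rat) natrM => cGB.
  have cB2 := ler_wpM2l (ler0n _ C) cBad.
  have key : (Dn%:R : rat) <= T%:R * eps * Dn%:R.
    rewrite /T natrD natrM; lra.
  have := ltr_pM2r Dn0; move=> /(_ (T%:R * eps) 1); rewrite hT mul1r => h.
  by rewrite ltNge key in h.
apply/matrixP => i j; apply/eqP; rewrite -subr_eq0 -mxsubE; apply/eqP.
apply/malgP => k; rewrite mcoeff0; case: (boolP (k \in U)) => hk.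
  exact: inU.
exact: outU.
Qed.
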